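(* Let $n\in\mathbb{N}$. For every $i=0,1,\dots,2n-1$, $$\sum_{j=\lfloor i/2\rfloor}^{n-1}\binom{n-1}{j}\left(\binom{n}{j+1}\binom{2j+1}{i}-\binom{n}{j}\binom{2j}{i}\right)\geq 0.$$
   Context: Binomial coefficients $\binom{a}{b}$ with integer $0\le a<b$ are $0$; $\lfloor\cdot\rfloor$ is the integer part. *)

(* Defs.v *)
From mathcomp Require Import all_boot all_order all_algebra.
Set Implicit Arguments. Unset Strict Implicit. Unset Printing Implicit Defensive.

(* Main.v *)
Require Import Defs.
From mathcomp Require Import all_boot all_order all_algebra.
From mathcomp Require Import ring.
Import Order.TTheory GRing.Theory Num.Theory.
Local Open Scope ring_scope.
Lemma L1 (R : comNzRingType) (c : R) N l : ((c%:P + 'X)^+N)`_l = c^+(N-l) *+ 'C(N,l).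
Proof.
rewrite exprDn.
have -> : \sum_(i < N.+1) c%:P ^+ (N - i) * 'X ^+ i *+ 'C(N, i) = \poly_(i < N.+1) (c^+(N-i) *+ 'C(N,i)).
  rewrite poly_def; apply: eq_bigr => i _.
  by rewrite -mul_polyC polyCMn rmorphXn mulrnAl.
rewrite coef_poly ltnS; case: leqP => // h.
by rewrite bin_small.
Qed.
Lemma L2 (R : comNzRingType) (c : R) N l : ((1 + c%:P * 'X)^+N)`_l = c^+l *+ 'C(N,l).
Proof.
rewrite exprDn.
have -> : \sum_(i < N.+1) 1 ^+ (N - i) * (c%:P * 'X) ^+ i *+ 'C(N, i) = \poly_(i < N.+1) (c^+i *+ 'C(N,i)).
  rewrite poly_def; apply: eq_bigr => i _.
  by rewrite expr1n mul1r exprMn -mul_polyC polyCMn rmorphXn mulrnAl.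
rewrite coef_poly ltnS; case: leqP => // h.
by rewrite bin_small.
Qed.
Section Core.
Variables (R : comNzRingType) (b : R) (m : nat).
Let K1 : {poly R} := (1 + b%:P*'X)^+m * (b%:P+'X)^+m.+1.
Lemma F1 : K1`_m = \sum_(j < m.+1) (('C(m,j) * 'C(m.+1,j.+1))%:R * b^+(j.*2.+1)).
Proof.
rewrite /K1 coefM; apply: eq_bigr => [[j /= hj]] _.
rewrite L2 L1.
have e1 : (m.+1 - (m - j) = j.+1)%N by rewrite subSn ?leq_subr // subKn.
have e2 : (m - j = m.+1 - j.+1)%N by rewrite subSS.
rewrite e1.
rewrite {1}e2.
rewrite bin_sub //.
rewrite -(mulr_natl (b^+j)) -(mulr_natl (b^+j.+1)) natrM.
have -> : (j.*2.+1 = j + j.+1)%N by rewrite -addnn addnS.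
rewrite exprD.
rewrite !mulrA; congr (_ * _); rewrite -!mulrA; congr (_ * _); exact: mulrC.
Qed.
Lemma F2 : K1`_m.+1 = \sum_(j < m.+1) (('C(m,j) * 'C(m.+1,j))%:R * b^+(j.*2)).
Proof.
rewrite /K1 coefM big_ord_recr /= L2 bin_small // mulr0n mul0r addr0.
apply: eq_bigr => [[j /= hj]] _.
rewrite L2 L1 /= subKn 1?ltnW // bin_sub 1?ltnW //.
rewrite -(mulr_natl (b^+j)) -(mulr_natl (b^+j) 'C(m.+1, j)) natrM -addnn exprD.
rewrite !mulrA; congr (_ * _); rewrite -!mulrA; congr (_ * _); exact: mulrC.
Qed.
Lemma F3 : K1 = \sum_(k < m.+1) ((b-1)^+((m-k).*2) * b^+k *+ 'C(m,k))%:P * ('X^(m-k) * ((1%:P+'X)^+(k.*2) * (b%:P + 'X))).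
Proof.
have e : (1+b%:P*'X)*(b%:P+'X) = ((b-1)%:P)^+2 * 'X + b%:P * (1%:P+'X)^+2 :> {poly R}.
  rewrite polyCB polyC1; ring.
have -> : K1 = (b%:P+'X) * ((1+b%:P*'X)*(b%:P+'X))^+m.
  by rewrite /K1 exprMn exprS; ring.
rewrite e exprDn mulr_sumr; apply: eq_bigr => k _.
rewrite -!mul2n !exprM polyCMn (polyCM (_ ^+ _)) !polyC_exp !exprMn.
ring.
Qed.
Lemma FQ k l : ((1%:P+'X)^+(k.*2) * (b%:P + 'X))`_l = b * 'C(k.*2,l)%:R + (if l == 0%N then 0 else 'C(k.*2,l.-1)%:R).
Proof.
rewrite mulrDr coefD mulrC coefCM coefMX L1 expr1n mulr_natr; congr (_ + _).
by case: (l == 0%N) => //; rewrite L1 expr1n.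
Qed.
Lemma FQk k : ((1%:P+'X)^+(k.*2) * (b%:P + 'X))`_k = b * 'C(k.*2,k)%:R + 'C(k.*2,k.+1)%:R.
Proof.
rewrite FQ; congr (_ + _); case: k => [|k] //=.
have h : (k = k.+1.*2 - k.+2)%N by rewrite -addnn addSn addnS subSS subSS addnK.
by rewrite {2}h bin_sub // -addnn addSn addnS !ltnS leq_addl.
Qed.
Lemma Core : K1`_m - K1`_m.+1 = (b - 1) * \sum_(k < m.+1) ('C(m,k)%:R * (b-1)^+((m-k).*2) * b^+k * ('C(k.*2,k)%:R - 'C(k.*2,k.+1)%:R)).
Proof.
rewrite F3 !coef_sum -sumrB mulr_sumr; apply: eq_bigr => [[k /= hk]] _.
rewrite !coefCM !coefXnM ltnNge leq_subr /= ltnNge (leq_trans (leq_subr _ _) (leqnSn _)) /=.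
rewrite subKn // subSn ?leq_subr // subKn // FQk FQ /=.
ring.
Qed.
End Core.

From mathcomp Require Import zify.
Lemma CoreX (m : nat) :
  \sum_(j < m.+1) (('C(m,j) * 'C(m.+1,j.+1))%:R * ('X + 1 : {poly int})^+(j.*2.+1))
  - \sum_(j < m.+1) (('C(m,j) * 'C(m.+1,j))%:R * ('X + 1)^+(j.*2))
  = 'X * \sum_(k < m.+1) ('C(m,k)%:R * 'X^((m-k).*2) * ('X + 1)^+k * ('C(k.*2,k)%:R - 'C(k.*2,k.+1)%:R)).
Proof. by rewrite -F1 -F2 Core addrK. Qed.

Definition nng (p : {poly int}) := forall i, 0 <= p`_i.
Lemma nngD p q : nng p -> nng q -> nng (p + q).
Proof. by move=> hp hq i; rewrite coefD addr_ge0. Qed.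
Lemma nngM p q : nng p -> nng q -> nng (p * q).
Proof. by move=> hp hq i; rewrite coefM sumr_ge0 // => j _; rewrite mulr_ge0. Qed.
Lemma nng_nat n : nng n%:R.
Proof. by move=> i; rewrite coefMn coef1 mulrn_wge0 // ler0n. Qed.
Lemma nngXX : nng 'X.
Proof. by move=> i; rewrite coefX ler0n. Qed.
Lemma nngexp p k : nng p -> nng (p ^+ k).
Proof. by move=> hp; elim: k => [|k IH]; [exact: (nng_nat 1) | rewrite exprS; exact: nngM]. Qed.
Lemma nng_sum n (F : 'I_n -> {poly int}) : (forall k, nng (F k)) -> nng (\sum_(k < n) F k).
Proof. by move=> h i; rewrite coef_sum; apply: sumr_ge0 => k _; apply: h. Qed.
Lemma cat_le k : ('C(k.*2,k.+1) <= 'C(k.*2,k))%N.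
Proof.
have h := mul_bin_left k.*2 k.
have e : (k.*2 - k = k)%N by rewrite -addnn addnK.
rewrite e in h.
rewrite -(@leq_pmul2l k.+1) // h leq_mul2r leqnSn orbT //.
Qed.

Theorem mainTheorem7 (n i : nat) (hi : (i < 2 * n)%N) :
  0 <= \sum_(i./2 <= j < n)
         ('C(n.-1, j)%:R : int) *
         (('C(n, j.+1) * 'C(j.*2.+1, i))%:R - ('C(n, j) * 'C(j.*2, i))%:R).
Proof.
case: n hi => [|m] hi; first by rewrite muln0 in hi.
rewrite /=.
have hh : (i./2 <= m.+1)%N by lia.
have -> : \sum_(i./2 <= j < m.+1)
         ('C(m, j)%:R : int) *
         (('C(m.+1, j.+1) * 'C(j.*2.+1, i))%:R - ('C(m.+1, j) * 'C(j.*2, i))%:R)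
  = \sum_(0 <= j < m.+1) ('C(m, j)%:R : int) *
         (('C(m.+1, j.+1) * 'C(j.*2.+1, i))%:R - ('C(m.+1, j) * 'C(j.*2, i))%:R).
  rewrite (@big_cat_nat _ _ _ i./2 0 m.+1) //= [X in _ = X + _]big1_seq ?add0r // => j.
  rewrite mem_iota add0n subn0 /= => hj.
  have := odd_double_half i; move: hj; set h := i./2 => hj ei.
  have hb : (j.*2.+1 < i)%N by rewrite -ei; case: (odd i); lia.
  by rewrite (bin_small hb) (bin_small (ltnW hb)) !muln0 subrr mulr0.
rewrite big_mkord.
have -> : \sum_(j < m.+1) ('C(m, j)%:R : int) *
         (('C(m.+1, j.+1) * 'C(j.*2.+1, i))%:R - ('C(m.+1, j) * 'C(j.*2, i))%:R)
  = (\sum_(j < m.+1) (('C(m,j) * 'C(m.+1,j.+1))%:R * ('X + 1 : {poly int})^+(j.*2.+1))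
  - \sum_(j < m.+1) (('C(m,j) * 'C(m.+1,j))%:R * ('X + 1)^+(j.*2)))`_i.
  rewrite coefB !coef_sum -sumrB; apply: eq_bigr => j _.
  rewrite !mulr_natl !coefMn -[('X + 1)]addrC -polyC1 !L1 !expr1n !natrM.
  ring.
rewrite CoreX.
apply: nngM; first exact: nngXX.
apply: nng_sum => k.
rewrite -natrB ?cat_le //.
apply: nngM; last exact: nng_nat.
apply: nngM; last by apply: nngexp; apply: nngD; [exact: nngXX | exact: (nng_nat 1)].
apply: nngM; [exact: nng_nat | apply: nngexp; exact: nngXX].
Qed.
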